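(* Let $R$ be a commutative ring in which $2$ is invertible, $I$ an ideal of $R$, let $Q=R$ with quadratic form $q(z)=z^2$, and let $m\ge1$. Identify automorphisms of $Q\perp\mathbb{H}(R)^m$ with matrices in $\mathrm{GL}_{2m+1}(R)$ via the ordered basis $(1,x_1,f_1,\dots,x_m,f_m)$. Then $\mathrm{EO}_{(R,I)}(Q,\mathbb{H}(R)^m)=\mathrm{EO}_{2m+1}(R,I)$.
   Context: For a quadratic form $q$ the bilinear form is $\langle x,y\rangle=q(x+y)-q(x)-q(y)$; on $Q=R$, $\langle z,z'\rangle=2zz'$. $\mathbb{H}(R)^m=\mathbb{H}(R^m)=R^m\oplus(R^m)^*$ with basis $x_1,\dots,x_m$, dual basis $f_1,\dots,f_m$, and $q(y,g)=g(y)$; orthogonal sums carry the sum of forms. With respect to the basis above the form has matrix $(2)\perp\widetilde{\psi}_m$, where $\widetilde{\psi}_s=\sum_{i=1}^s(e_{2i-1,2i}+e_{2i,2i-1})$ and $e_{i,j}$ are matrix units. DSER transformations on $Q\perp\mathbb{H}(P)$: for $\alpha:Q\to P$ let $\alpha^*:P^*\to Q$ satisfy $\langle\alpha^*(g),z\rangle=g(\alpha(z))$, $E_\alpha(z,y,g)=(z-\alpha^*(g),y+\alpha(z)-\tfrac12\alpha\alpha^*(g),g)$; for $\beta:Q\to P^*$ let $\beta^*:P\to Q$ satisfy $\langle\beta^*(y),z\rangle=\beta(z)(y)$, $E^*_\beta(z,y,g)=(z-\beta^*(y),y,g+\beta(z)-\tfrac12\beta\beta^*(y))$. $\mathrm{EO}_R(Q,\mathbb{H}(P))$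 is generated by all $E_\alpha,E^*_\beta$; $\mathrm{EO}_I(Q,\mathbb{H}(P))$ by those with $\alpha(Q)\subseteq IP$, $\beta(Q)\subseteq IP^*$; $\mathrm{EO}_{(R,I)}(Q,\mathbb{H}(P))$ is the normal closure of $\mathrm{EO}_I(Q,\mathbb{H}(P))$ in $\mathrm{EO}_R(Q,\mathbb{H}(P))$. Odd elementary orthogonal group: for $N=2s+1$ and $1\le i\le s$, $F^1_i(\lambda)=I_N+\lambda(e_{1,2i+1}-2e_{2i,1}-\lambda e_{2i,2i+1})$, $F^2_i(\lambda)=I_N+\lambda(e_{1,2i}-2e_{2i+1,1}-\lambda e_{2i+1,2i})$. $\mathrm{EO}_{2s+1}(R)$ is generated by these with $\lambda\in R$, $\mathrm{EO}_{2s+1}(I)$ by those with $\lambda\in I$, and $\mathrm{EO}_{2s+1}(R,I)$ is the normal closure of $\mathrm{EO}_{2s+1}(I)$ in $\mathrm{EO}_{2s+1}(R)$. *)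

(* Defs.v *)
From HB Require Import structures.
From mathcomp Require Import all_boot all_order all_algebra.
From mathcomp Require Import ring.
Unset Printing Implicit Defensive.
Import Order.TTheory GRing.Theory Num.Theory.
Local Open Scope ring_scope.

Section Defs.
Context {R : comUnitRingType}.

Inductive gen_grp (n : nat) (S : 'M[R]_n.+1 -> Prop) : 'M[R]_n.+1 -> Prop :=
| gen_one : gen_grp n S 1
| gen_mul s x : S s -> gen_grp n S x -> gen_grp n S (s * x)
| gen_inv s x : S s -> gen_grp n S x -> gen_grp n S (s^-1 * x).

Definition normal_closure (n : nat) (G H : 'M[R]_n.+1 -> Prop) : 'M[R]_n.+1 -> Prop :=
  gen_grp n (fun x => exists g h, [/\ G g, H h & x = g * h * g^-1]).

Definition is_ideal (I : R -> Prop) : Prop :=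
  [/\ I 0, (forall x y, I x -> I y -> I (x + y)) & (forall r x, I x -> I (r * x))].

(* elements (z, y, g) with z in Q = R, y in R^m (coordinates on x_1..x_m),
   g in (R^m)^* (coordinates on the dual basis f_1..f_m) *)
Definition QH (m : nat) := (R * 'rV[R]_m * 'rV[R]_m)%type.

Definition ev (m : nat) (g y : 'rV[R]_m) : R := \sum_(i < m) g 0 i * y 0 i.

Definition qQ (z : R) : R := z ^+ 2.
Definition bilQ (w z : R) : R := qQ (w + z) - qQ w - qQ z.

(* R-linear maps alpha : Q = R -> P = R^m are z |-> z *: a (a = alpha 1),
   R-linear maps beta : Q -> P^* are z |-> z *: b (b = beta 1). *)
Definition alpha_map (m : nat) (a : 'rV[R]_m) (z : R) : 'rV[R]_m := z *: a.
Definition beta_map (m : nat) (b : 'rV[R]_m) (z : R) : 'rV[R]_m := z *: b.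

(* adjoints: <alpha^*(g), z> = g(alpha z) and <beta^*(y), z> = beta(z)(y);
   since <w,z> = 2wz and 2 is invertible these are: *)
Definition alpha_star (m : nat) (a : 'rV[R]_m) (g : 'rV[R]_m) : R := 2^-1 * ev m g a.
Definition beta_star (m : nat) (b : 'rV[R]_m) (y : 'rV[R]_m) : R := 2^-1 * ev m b y.

Definition E_alpha (m : nat) (a : 'rV[R]_m) (v : QH m) : QH m :=
  let: (z, y, g) := v in
  (z - alpha_star m a g,
   y + alpha_map m a z - 2^-1 *: alpha_map m a (alpha_star m a g),
   g).

Definition E_beta (m : nat) (b : 'rV[R]_m) (v : QH m) : QH m :=
  let: (z, y, g) := v in
  (z - beta_star m b y,
   y,
   g + beta_map m b z - 2^-1 *: beta_map m b (beta_star m b y)).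

Inductive bidx (m : nat) := BQ | BX of 'I_m | BF of 'I_m.
Arguments BQ {m}. Arguments BX {m}. Arguments BF {m}.

(* position k (0-based) in the ordered basis (1, x_1, f_1, ..., x_m, f_m) *)
Definition decode (m : nat) (k : 'I_((2 * m).+1)) : bidx m :=
  if val k is j.+1 then
    match (insub (j./2) : option 'I_m) with
    | Some i => if odd j then BF i else BX i
    | None => BQ
    end
  else BQ.

Definition basis_vec (m : nat) (b : bidx m) : QH m :=
  match b with
  | BQ => (1, 0, 0)
  | BX i => (0, delta_mx 0 i, 0)
  | BF i => (0, 0, delta_mx 0 i)
  end.

Definition coord (m : nat) (v : QH m) (b : bidx m) : R :=
  match b with
  | BQ => v.1.1
  | BX i => v.1.2 0 i
  | BF i => v.2 0 i
  end.

Definition mx_of (m : nat) (T : QH m -> QH m) : 'M[R]_((2 * m).+1) :=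
  \matrix_(r, c) coord m (T (basis_vec m (decode m c))) (decode m r).

Definition EO_DSER_gens (m : nat) (I : R -> Prop) (M : 'M[R]_((2 * m).+1)) : Prop :=
  (exists a : 'rV[R]_m, (forall z i, I (alpha_map m a z 0 i)) /\ M = mx_of m (E_alpha m a))
  \/ (exists b : 'rV[R]_m, (forall z i, I (beta_map m b z 0 i)) /\ M = mx_of m (E_beta m b)).

Definition EO_DSER_R (m : nat) := gen_grp (2 * m) (EO_DSER_gens m (fun _ => True)).
Definition EO_DSER_I (m : nat) (I : R -> Prop) := gen_grp (2 * m) (EO_DSER_gens m I).
Definition EO_DSER_RI (m : nat) (I : R -> Prop) :=
  normal_closure (2 * m) (EO_DSER_R m) (EO_DSER_I m I).

(* matrix unit e_{i,j} with 1-based indices *)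
Definition e_unit (s : nat) (i j : nat) : 'M[R]_((2 * s).+1) :=
  delta_mx (inord i.-1) (inord j.-1).

Definition F1 (s i : nat) (l : R) : 'M[R]_((2 * s).+1) :=
  1%:M + l *: (e_unit s 1 (2 * i).+1 - 2 *: e_unit s (2 * i) 1
               - l *: e_unit s (2 * i) (2 * i).+1).

Definition F2 (s i : nat) (l : R) : 'M[R]_((2 * s).+1) :=
  1%:M + l *: (e_unit s 1 (2 * i) - 2 *: e_unit s (2 * i).+1 1
               - l *: e_unit s (2 * i).+1 (2 * i)).

Definition EO_odd_gens (s : nat) (I : R -> Prop) (M : 'M[R]_((2 * s).+1)) : Prop :=
  exists i l, [/\ (1 <= i <= s)%N, I l & (M = F1 s i l \/ M = F2 s i l)].

Definition EO_odd_R (s : nat) := gen_grp (2 * s) (EO_odd_gens s (fun _ => True)).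
Definition EO_odd_I (s : nat) (I : R -> Prop) := gen_grp (2 * s) (EO_odd_gens s I).
Definition EO_odd_RI (s : nat) (I : R -> Prop) :=
  normal_closure (2 * s) (EO_odd_R s) (EO_odd_I s I).

End Defs.

Lemma alpha_star_adj (R : comUnitRingType) (m : nat) (a g : 'rV[R]_m) (z : R) :
  (2 : R) \is a GRing.unit -> bilQ (alpha_star m a g) z = ev m g (alpha_map m a z).
Proof.
move=> u2; rewrite /bilQ /qQ /alpha_star /ev /alpha_map.
have -> : forall x y : R, (x + y) ^+ 2 - x ^+ 2 - y ^+ 2 = 2 * x * y.
  by move=> x w; ring.
rewrite mulrA mulrV // mul1r mulr_suml; apply: eq_bigr => i _.
by rewrite mxE; ring.
Qed.

Lemma beta_star_adj (R : comUnitRingType) (m : nat) (b y : 'rV[R]_m) (z : R) :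
  (2 : R) \is a GRing.unit -> bilQ (beta_star m b y) z = ev m (beta_map m b z) y.
Proof.
move=> u2; rewrite /bilQ /qQ /beta_star /ev /beta_map.
have -> : forall x y : R, (x + y) ^+ 2 - x ^+ 2 - y ^+ 2 = 2 * x * y.
  by move=> x w; ring.
rewrite mulrA mulrV // mul1r mulr_suml; apply: eq_bigr => i _.
by rewrite mxE; ring.
Qed.

(* Main.v *)
Require Import Defs.
From HB Require Import structures.
From mathcomp Require Import all_boot all_order all_algebra.
From mathcomp Require Import ring zify.
Import GRing.Theory.
Local Open Scope ring_scope.

Section Aux.
Context {R : comUnitRingType} (m : nat).

Definition enc (b : bidx m) : nat :=
  match b with BQ => 0 | BX i => (2 * i).+1 | BF i => (2 * i).+2 end.

Lemma enc_decode (k : 'I_((2 * m).+1)) : enc (decode m k) = val k.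
Proof.
rewrite /decode; case: k => [[|j] Hk] //=.
case: insubP => [i Hi Hv|Hn] /=.
- have := odd_double_half j.
  case Ho: (odd j) => /= Hj; rewrite Hv; move: Hj; rewrite -mul2n;
    set t := j./2; lia.
- exfalso; move/negP: Hn; apply; rewrite ltn_half_double.
  by rewrite -mul2n; lia.
Qed.

Lemma enc_inj (b c : bidx m) : enc b = enc c -> b = c.
Proof.
case: b => [|i|i]; case: c => [|j|j] //= H; try lia;
by congr (_ _); apply: val_inj => /=; lia.
Qed.

Lemma decodeE (k : 'I_((2 * m).+1)) b : val k = enc b -> decode m k = b.
Proof. by move=> H; apply: enc_inj; rewrite enc_decode. Qed.

Definition beq (b c : bidx m) : bool :=
  match b, c with
  | BQ, BQ => true
  | BX i, BX j => i == j
  | BF i, BF j => i == j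
  | _, _ => false end.

Lemma decode_eqE (r c : 'I_((2 * m).+1)) : (r == c) = beq (decode m r) (decode m c).
Proof.
have -> : (r == c) = (enc (decode m r) == enc (decode m c)).
  by rewrite !enc_decode.
case: (decode m r) => [|i|i]; case: (decode m c) => [|j|j] //=;
  try (apply/negbTE/eqP; lia);
  by apply/eqP/eqP => [H|->] //; apply: val_inj => /=; lia.
Qed.

End Aux.
Section NF.
Context {R : comUnitRingType} (n k : nat) (h : R) (X F : 'M[R]_(n, k)) (p : 'cV[R]_n).

Definition NF (a : 'rV_k) (C : 'M_k) : 'M[R]_n :=
  1%:M + X *m a^T *m p^T - h *: (p *m a *m F^T) + X *m C *m F^T.

Lemma NF_mul (pX : p^T *m X = 0) (Fp : F^T *m p = 0) (FX : F^T *m X = 0)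
   (pp : p^T *m p = 1%:M) a C a' C' :
  NF a C *m NF a' C' = NF (a + a') (C + C' - h *: (a^T *m a')).
Proof.
have mPX r (M : 'M_(r, 1)) : M *m p^T *m X = 0 by rewrite -mulmxA pX mulmx0.
have mFp r (M : 'M_(r, k)) : M *m F^T *m p = 0 by rewrite -mulmxA Fp mulmx0.
have mFX r (M : 'M_(r, k)) : M *m F^T *m X = 0 by rewrite -mulmxA FX mulmx0.
have mPP r (M : 'M_(r, 1)) : M *m p^T *m p = M by rewrite -mulmxA pp mulmx1.
have sAl r s t (c : R) (A : 'M_(r, s)) (B : 'M_(s, t)) : (c *: A) *m B = c *: (A *m B).
  by rewrite scalemxAl.
have sAr r s t (c : R) (A : 'M_(r, s)) (B : 'M_(s, t)) : A *m (c *: B) = c *: (A *m B).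
  by rewrite scalemxAr.
rewrite /NF !(mulmxDl, mulmxDr, mulmxBl, mulmxBr, mul1mx, mulmx1).
rewrite ?(mulmxN, mulNmx, sAl, sAr, mulmxA, mPX, mFp, mFX, mPP, mul0mx, mulmx0, scaler0, oppr0, scalerN).
rewrite !raddfD /= !(mulmxDl, mulmxDr, mulmxBl, mulmxBr, scalerDr, scalerBr).
rewrite ?(mulmxN, mulNmx, sAl, sAr, mulmxA, scalerN, scalerA).
by rewrite !addr0; apply/matrixP => i j; rewrite !mxE; ring.
Qed.

Context (hh : 2 * h = 1) (pX : p^T *m X = 0) (Fp : F^T *m p = 0) (FX : F^T *m X = 0)
   (pp : p^T *m p = 1%:M).

Definition G (a : 'rV_k) := NF a (- (h ^+ 2) *: (a^T *m a)).

Lemma NF00 : NF 0 0 = 1%:M.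
Proof.
by rewrite /NF !linear0 !(mulmx0, mul0mx, scaler0, subr0, addr0).
Qed.

Lemma trmul_entry (a b : 'rV[R]_k) i j : (a^T *m b) i j = a 0 i * b 0 j.
Proof. by rewrite !mxE big_ord1 !mxE. Qed.

Lemma G_inv a : G a *m G (- a) = 1%:M.
Proof.
rewrite /G NF_mul // subrr -NF00; congr NF.
apply/matrixP => i j; rewrite !mxE ?big_ord1 !mxE.
apply: (@eq_trans _ _ ((1 - 2 * h) * (h * (a ord0 i * a ord0 j)))); first ring.
by rewrite hh subrr ?oppr0 mul0r.
Qed.

Lemma G_six a b :
  G (a + b) = G a *m G b *m G (h *: a) *m G (- b) *m G (- (h *: a)) *m G b.
Proof.
rewrite /G !NF_mul //; congr NF.
  by apply/matrixP => i j; rewrite !mxE; ring.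
apply/matrixP => i j; rewrite !mxE ?big_ord1 !mxE.
apply/eqP; rewrite -subr_eq0; apply/eqP.
apply: (@eq_trans _ _ (- (1 - 2 * h) * (h ^+ 3 * a ord0 i * a ord0 j + h * b ord0 i * b ord0 j
     - h * a ord0 i * b ord0 j))); first ring.
by rewrite hh subrr ?oppr0 mul0r.
Qed.

End NF.

Section Conc.
Context {R : comUnitRingType} (m : nat).
Local Notation N := (2 * m).+1.

Definition pv : 'cV[R]_N := delta_mx ord0 ord0.
Definition Xm : 'M[R]_(N, m) :=
  \matrix_(k, i) (if decode m k is BX j then (j == i)%:R else 0).
Definition Fm : 'M[R]_(N, m) :=
  \matrix_(k, i) (if decode m k is BF j then (j == i)%:R else 0).

Lemma decode0 : decode m (ord0 : 'I_N) = BQ m. Proof. by []. Qed.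

Lemma pvE k (i : 'I_1) : pv k i = if decode m k is BQ then 1 else 0.
Proof.
rewrite /pv mxE ord1 eqxx andbT decode_eqE decode0.
by case: (decode m k).
Qed.

Lemma pX : pv^T *m Xm = 0.
Proof.
apply/matrixP => i j; rewrite !mxE; apply: big1 => k _.
rewrite !mxE !ord1 !eqxx ?andbT !decode_eqE decode0.
case: (decode m k) => *; by rewrite ?mul0r ?mulr0.
Qed.

Lemma pF : pv^T *m Fm = 0.
Proof.
apply/matrixP => i j; rewrite !mxE; apply: big1 => k _.
rewrite !mxE !ord1 !eqxx ?andbT !decode_eqE decode0.
case: (decode m k) => *; by rewrite ?mul0r ?mulr0.
Qed.

Lemma Fp : Fm^T *m pv = 0.
Proof. by rewrite -[Fm^T *m pv]trmxK trmx_mul trmxK pF linear0. Qed.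

Lemma Xp : Xm^T *m pv = 0.
Proof. by rewrite -[Xm^T *m pv]trmxK trmx_mul trmxK pX linear0. Qed.

Lemma FX : Fm^T *m Xm = 0.
Proof.
apply/matrixP => i j; rewrite !mxE; apply: big1 => k _.
rewrite !mxE; case: (decode m k) => *; by rewrite ?mul0r ?mulr0.
Qed.

Lemma XF : Xm^T *m Fm = 0.
Proof.
apply/matrixP => i j; rewrite !mxE; apply: big1 => k _.
rewrite !mxE; case: (decode m k) => *; by rewrite ?mul0r ?mulr0.
Qed.

Lemma pp : pv^T *m pv = 1%:M.
Proof.
apply/matrixP => i j; rewrite !ord1 !mxE (bigD1 ord0) //= big1.
  by rewrite !mxE !eqxx mulr1 addr0.
move=> k Hk; rewrite !mxE !eqxx !andbT.
by move: Hk; rewrite !decode_eqE decode0; case: (decode m k) => //= *; rewrite mulr0.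
Qed.


Definition hf : R := 2^-1.
Definition Amx (a : 'rV[R]_m) := G N m hf Xm Fm pv a.
Definition Bmx (a : 'rV[R]_m) := G N m hf Fm Xm pv a.

Lemma sumd (j : 'I_m) (F : 'I_m -> R) : \sum_i (j == i)%:R * F i = F j.
Proof.
rewrite (bigD1 j) //= eqxx mul1r big1 ?addr0 // => i Hi.
by rewrite eq_sym (negbTE Hi) mul0r.
Qed.
Lemma sumdr (j : 'I_m) (F : 'I_m -> R) : \sum_i F i * (j == i)%:R = F j.
Proof. by rewrite -[RHS](sumd j); apply: eq_bigr => i _; rewrite mulrC. Qed.
Lemma sum0l (F : 'I_m -> R) : \sum_i 0 * F i = 0.
Proof. by apply: big1 => i _; rewrite mul0r. Qed.
Lemma sum0r (F : 'I_m -> R) : \sum_i F i * 0 = 0.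
Proof. by apply: big1 => i _; rewrite mulr0. Qed.

Lemma addE p q (A B : 'M[R]_(p, q)) i j : (A + B) i j = A i j + B i j.
Proof. by rewrite mxE. Qed.
Lemma oppE p q (A : 'M[R]_(p, q)) i j : (- A) i j = - A i j.
Proof. by rewrite mxE. Qed.
Lemma sclE p q x (A : 'M[R]_(p, q)) i j : (x *: A) i j = x * A i j.
Proof. by rewrite mxE. Qed.
Lemma oneE (i j : 'I_N) : (1%:M : 'M[R]_N) i j = (beq m (decode m i) (decode m j))%:R.
Proof. by rewrite mxE decode_eqE. Qed.
Lemma colrowE p q (u : 'M[R]_(p, 1)) (v : 'M[R]_(1, q)) i j : (u *m v) i j = u i ord0 * v ord0 j.
Proof. by rewrite mxE big_ord1. Qed.
Lemma XmE p (M : 'M[R]_(m, p)) r c : (Xm *m M) r c = if decode m r is BX j then M j c else 0.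
Proof.
rewrite mxE; under eq_bigr do rewrite mxE.
by case: (decode m r) => [|j|j]; rewrite ?sum0l ?sumd.
Qed.
Lemma FmE p (M : 'M[R]_(m, p)) r c : (Fm *m M) r c = if decode m r is BF j then M j c else 0.
Proof.
rewrite mxE; under eq_bigr do rewrite mxE.
by case: (decode m r) => [|j|j]; rewrite ?sum0l ?sumd.
Qed.
Lemma XmtE p (M : 'M[R]_(p, m)) r c : (M *m Xm^T) r c = if decode m c is BX j then M r j else 0.
Proof.
rewrite mxE; under eq_bigr do rewrite !mxE.
by case: (decode m c) => [|j|j]; rewrite ?sum0r ?sumdr.
Qed.
Lemma FmtE p (M : 'M[R]_(p, m)) r c : (M *m Fm^T) r c = if decode m c is BF j then M r j else 0.
Proof.
rewrite mxE; under eq_bigr do rewrite !mxE.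
by case: (decode m c) => [|j|j]; rewrite ?sum0r ?sumdr.
Qed.
Lemma pvE' k i : (pv : 'cV[R]_N) k i = if decode m k is BQ then 1 else 0.
Proof.
rewrite /pv mxE ord1 eqxx andbT decode_eqE decode0.
by case: (decode m k).
Qed.
Lemma trE p q (A : 'M[R]_(p, q)) i j : A^T i j = A j i.
Proof. by rewrite mxE. Qed.

Lemma zero1 : (0 : 'I_1) = ord0. Proof. by apply: val_inj. Qed.
Lemma ev0 (a : 'rV[R]_m) : ev m 0 a = 0.
Proof. by rewrite /ev; apply: big1 => i _; rewrite mxE mul0r. Qed.
Lemma evd (a : 'rV[R]_m) j : ev m (delta_mx 0 j) a = a ord0 j.
Proof.
rewrite /ev; under eq_bigr do rewrite mxE eqxx /= eq_sym.
by rewrite sumd zero1.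
Qed.
Lemma evd' (a : 'rV[R]_m) j : ev m a (delta_mx 0 j) = a ord0 j.
Proof.
rewrite /ev; under eq_bigr do rewrite mxE eqxx /= eq_sym.
by rewrite sumdr zero1.
Qed.
Lemma ev0' (a : 'rV[R]_m) : ev m a 0 = 0.
Proof. by rewrite /ev; apply: big1 => i _; rewrite mxE mulr0. Qed.

Ltac entry_simpl := rewrite /= ?(addE, oppE, sclE, oneE, FmtE, XmtE, colrowE, XmE, FmE, pvE', trE, decode0, ev0, evd, ev0', evd', zero1) /=.

Lemma mx_alpha (a : 'rV[R]_m) : mx_of m (E_alpha m a) = Amx a.
Proof.
apply/matrixP => r c.
rewrite /Amx /G /NF /mx_of mxE; entry_simpl.
case: (decode m c) => [|j|j]; entry_simpl;
case: (decode m r) => [|i|i]; entry_simpl.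
all: rewrite /alpha_star /alpha_map; entry_simpl.
all: rewrite ?(mxE, zero1, ev0, evd, ev0', evd') /=.
all: by rewrite /hf; ring.
Qed.

Lemma mx_beta (a : 'rV[R]_m) : mx_of m (E_beta m a) = Bmx a.
Proof.
apply/matrixP => r c.
rewrite /Bmx /G /NF /mx_of mxE; entry_simpl.
case: (decode m c) => [|j|j]; entry_simpl;
case: (decode m r) => [|i|i]; entry_simpl.
all: rewrite /beta_star /beta_map; entry_simpl.
all: rewrite ?(mxE, zero1, ev0, evd, ev0', evd') /=.
all: by rewrite /hf; ring.
Qed.

Lemma hfE (u2 : (2 : R) \is a GRing.unit) : 2 * hf = 1.
Proof. by rewrite /hf mulrV. Qed.

Ltac hring hh Q := apply/eqP; rewrite -subr_eq0; apply/eqP;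
  apply: (@eq_trans _ _ ((2 * hf - 1) * Q)); [ring | by rewrite hh subrr mul0r].

Lemma enc_lt (b : bidx m) : (enc m b < N)%N.
Proof. by case: b => [|i|i] //=; have := ltn_ord i; lia. Qed.

Lemma dec_inord k b : k = enc m b -> decode m (inord k : 'I_N) = b.
Proof. by move=> ->; apply: decodeE; apply: inordK; exact: enc_lt. Qed.

Lemma e1E (j : 'I_m) r c : (e_unit m 1 (2 * j.+1).+1 : 'M[R]_N) r c =
   (beq m (decode m r) (BQ m) && beq m (decode m c) (BF m j))%:R.
Proof.
rewrite /e_unit mxE !decode_eqE (@dec_inord (1.-1) (BQ m)) // (@dec_inord ((2 * j.+1).+1.-1) (BF m j)) //=; lia.
Qed.
Lemma e2E (j : 'I_m) r c : (e_unit m (2 * j.+1) 1 : 'M[R]_N) r c =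
   (beq m (decode m r) (BX m j) && beq m (decode m c) (BQ m))%:R.
Proof.
rewrite /e_unit mxE !decode_eqE (@dec_inord (1.-1) (BQ m)) // (@dec_inord ((2 * j.+1).-1) (BX m j)) //=; lia.
Qed.
Lemma e3E (j : 'I_m) r c : (e_unit m (2 * j.+1) (2 * j.+1).+1 : 'M[R]_N) r c =
   (beq m (decode m r) (BX m j) && beq m (decode m c) (BF m j))%:R.
Proof.
rewrite /e_unit mxE !decode_eqE (@dec_inord ((2 * j.+1).-1) (BX m j)) ?(@dec_inord ((2 * j.+1).+1.-1) (BF m j)) //=; lia.
Qed.

Lemma e4E (j : 'I_m) r c : (e_unit m 1 (2 * j.+1) : 'M[R]_N) r c =
   (beq m (decode m r) (BQ m) && beq m (decode m c) (BX m j))%:R.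
Proof.
rewrite /e_unit mxE !decode_eqE (@dec_inord (1.-1) (BQ m)) // (@dec_inord ((2 * j.+1).-1) (BX m j)) //=; lia.
Qed.
Lemma e5E (j : 'I_m) r c : (e_unit m (2 * j.+1).+1 1 : 'M[R]_N) r c =
   (beq m (decode m r) (BF m j) && beq m (decode m c) (BQ m))%:R.
Proof.
rewrite /e_unit mxE !decode_eqE (@dec_inord (1.-1) (BQ m)) // (@dec_inord ((2 * j.+1).+1.-1) (BF m j)) //=; lia.
Qed.
Lemma e6E (j : 'I_m) r c : (e_unit m (2 * j.+1).+1 (2 * j.+1) : 'M[R]_N) r c =
   (beq m (decode m r) (BF m j) && beq m (decode m c) (BX m j))%:R.
Proof.
rewrite /e_unit mxE !decode_eqE (@dec_inord ((2 * j.+1).-1) (BX m j)) ?(@dec_inord ((2 * j.+1).+1.-1) (BF m j)) //=; lia.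
Qed.

Lemma F1_A (u2 : (2 : R) \is a GRing.unit) (j : 'I_m) (y : R) :
  Amx ((- (2 * y)) *: delta_mx 0 j) = F1 m j.+1 y.
Proof.
apply/matrixP => r c.
rewrite /Amx /G /NF /F1 mxE; entry_simpl; rewrite ?(addE, oppE, sclE, e1E, e2E, e3E, oneE).
case: (decode m c) => [|k|k]; entry_simpl;
case: (decode m r) => [|i|i]; entry_simpl.
all: rewrite ?(mxE, zero1) /= ?andbT ?andbF.
all: try case: (i == j); try case: (k == j); try case: (i == k); rewrite /=.
all: try ring.
all: have hh := hfE u2.
- by hring hh y.
- by hring hh (- (2 * hf + 1) * y ^+ 2).
- by hring hh (- (2 * hf + 1) * y ^+ 2).
Qed.

Lemma F2_B (u2 : (2 : R) \is a GRing.unit) (j : 'I_m) (y : R) :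
  Bmx ((- (2 * y)) *: delta_mx 0 j) = F2 m j.+1 y.
Proof.
apply/matrixP => r c.
rewrite /Bmx /G /NF /F2 mxE; entry_simpl; rewrite ?(addE, oppE, sclE, e4E, e5E, e6E, oneE).
case: (decode m c) => [|k|k]; entry_simpl;
case: (decode m r) => [|i|i]; entry_simpl.
all: rewrite ?(mxE, zero1) /= ?andbT ?andbF.
all: try case: (i == j); try case: (k == j); try case: (i == k); rewrite /=.
all: try ring.
all: have hh := hfE u2.
- by hring hh y.
- by hring hh (- (2 * hf + 1) * y ^+ 2).
- by hring hh (- (2 * hf + 1) * y ^+ 2).
Qed.
End Conc.

Section Grp.
Context {R : comUnitRingType} (n : nat).

Lemma gen_mulc (S : 'M[R]_n.+1 -> Prop) x y :
  gen_grp n S x -> gen_grp n S y -> gen_grp n S (x * y).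
Proof.
elim=> [|s x' Ss _ IH|s x' Ss _ IH] Hy; first by rewrite mul1r.
- by rewrite -mulrA; apply: gen_mul => //; apply: IH.
- by rewrite -mulrA; apply: gen_inv => //; apply: IH.
Qed.

Lemma gen_sub (S T : 'M[R]_n.+1 -> Prop) :
  (forall s, S s -> gen_grp n T s /\ gen_grp n T s^-1) ->
  forall x, gen_grp n S x -> gen_grp n T x.
Proof.
move=> H x; elim=> [|s x' Ss _ IH|s x' Ss _ IH]; first exact: gen_one.
- by apply: gen_mulc => //; case: (H s Ss).
- by apply: gen_mulc => //; case: (H s Ss).
Qed.

Lemma gen_mono (S T : 'M[R]_n.+1 -> Prop) :
  (forall s, S s -> T s) -> forall x, gen_grp n S x -> gen_grp n T x.
Proof.
move=> H x; elim=> [|s x' Ss _ IH|s x' Ss _ IH]; first exact: gen_one.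
- by apply: gen_mul => //; apply: H.
- by apply: gen_inv => //; apply: H.
Qed.

Lemma gen_gen1 (S : 'M[R]_n.+1 -> Prop) s : S s -> gen_grp n S s.
Proof. by move=> Ss; rewrite -[s]mulr1; apply: gen_mul => //; apply: gen_one. Qed.

Lemma nc_mono (G G' H H' : 'M[R]_n.+1 -> Prop) :
  (forall g, G g -> G' g) -> (forall h, H h -> H' h) ->
  forall x, normal_closure n G H x -> normal_closure n G' H' x.
Proof.
move=> HG HH x; apply: gen_mono => s [g [h [Gg Hh ->]]].
by exists g, h; split => //; [apply: HG | apply: HH].
Qed.

End Grp.

Section Decomp.
Context {R : comUnitRingType} (m : nat).
Local Notation N := (2 * m).+1.

Lemma Jneg (J : R -> Prop) : is_ideal J -> forall x, J x -> J (- x).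
Proof. by case=> _ _ HM x Jx; rewrite -mulN1r; apply: HM. Qed.
Lemma Jsub (J : R -> Prop) : is_ideal J -> forall x y, J x -> J y -> J (x - y).
Proof. move=> HJ x y Jx Jy; have [_ HA _] := HJ; apply: HA => //; exact: Jneg. Qed.
Lemma Jmul (J : R -> Prop) : is_ideal J -> forall c x, J x -> J (c * x).
Proof. by case. Qed.

Lemma decomp (J : R -> Prop) (HJ : is_ideal J) (Phi : 'rV[R]_m -> 'M[R]_N)
   (P : 'M[R]_N -> Prop) :
  P 1 -> (forall x y, P x -> P y -> P (x * y)) ->
  (forall a b, Phi (a + b) = Phi a * Phi b * Phi (hf *: a) * Phi (- b)
                              * Phi (- (hf *: a)) * Phi b) ->
  Phi 0 = 1 -> (forall j c, J c -> P (Phi (c *: delta_mx 0 j))) ->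
  forall a : 'rV[R]_m, (forall i, J (a ord0 i)) -> P (Phi a).
Proof.
move=> P1 PM six P0 Pd.
suff H : forall k (a : 'rV[R]_m), (forall i, J (a ord0 i)) ->
    (forall i : 'I_m, (k <= i)%N -> a ord0 i = 0) -> P (Phi a).
  move=> a Ja; apply: (H m) => // i; have := ltn_ord i; lia.
elim=> [|k IH] a Ja Sa.
  have -> : a = 0 by apply/matrixP => i j; rewrite ord1 mxE; apply: Sa.
  by rewrite P0.
case: (ltnP k m) => [km | mk]; last first.
  by apply: IH => // i ki; apply: Sa; have := ltn_ord i; lia.
pose kk := Ordinal km.
pose e := a ord0 kk *: (delta_mx 0 kk : 'rV[R]_m).
pose s := a - e.
have -> : a = s + e by rewrite subrK.
have sE i : s ord0 i = a ord0 i - a ord0 kk * (kk == i)%:R.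
  rewrite /s /e !mxE; have -> : (ord0 == 0 :> 'I_1) = true by []. by rewrite /= eq_sym.
have Js : forall i, J (s ord0 i).
  by move=> i; rewrite sE; apply: Jsub => //; last rewrite mulrC; apply: Jmul.
have Ss : forall i : 'I_m, (k <= i)%N -> s ord0 i = 0.
  move=> i ki; rewrite sE; case: (eqVneq kk i) => [<-|ne].
    by rewrite mulr1 subrr.
  rewrite mulr0 subr0; apply: Sa; move: ne; rewrite -val_eqE /= => ne; lia.
have Jhs : forall i, J ((hf *: s) ord0 i) by move=> i; rewrite mxE; apply: Jmul.
have Shs : forall i : 'I_m, (k <= i)%N -> (hf *: s) ord0 i = 0.
  by move=> i ki; rewrite mxE Ss // mulr0.
have Jnhs : forall i, J ((- (hf *: s)) ord0 i) by move=> i; rewrite mxE; apply: Jneg.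
have Snhs : forall i : 'I_m, (k <= i)%N -> (- (hf *: s)) ord0 i = 0.
  by move=> i ki; rewrite mxE Shs // oppr0.
have Pe : P (Phi e) by apply: Pd.
have Pne : P (Phi (- e)) by rewrite /e -scaleNr; apply: Pd; apply: Jneg.
rewrite six; apply: (PM) => //; apply: (PM); last by apply: (IH). apply: (PM) => //; apply: (PM); last by apply: (IH). by apply: (PM) => //; apply: (IH).
Qed.

End Decomp.

Section Final.
Context {R : comUnitRingType} (m : nat) (u2 : (2 : R) \is a GRing.unit).
Local Notation N := (2 * m).+1.

Lemma Amx0 : Amx m 0 = 1 :> 'M[R]_N.
Proof. by rewrite /Amx /G ?linear0 ?mul0mx ?mulmx0 ?scaler0 NF00. Qed.
Lemma Bmx0 : Bmx m 0 = 1 :> 'M[R]_N.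
Proof. by rewrite /Bmx /G ?linear0 ?mul0mx ?mulmx0 ?scaler0 NF00. Qed.

Lemma Amx_six (a b : 'rV[R]_m) : Amx m (a + b) = Amx m a * Amx m b * Amx m (hf *: a)
   * Amx m (- b) * Amx m (- (hf *: a)) * Amx m b.
Proof. by rewrite /Amx (G_six _ _ _ _ _ _ (hfE u2) (pX m) (Fp m) (FX m) (pp m)) !mulmxE. Qed.
Lemma Bmx_six (a b : 'rV[R]_m) : Bmx m (a + b) = Bmx m a * Bmx m b * Bmx m (hf *: a)
   * Bmx m (- b) * Bmx m (- (hf *: a)) * Bmx m b.
Proof. by rewrite /Bmx (G_six _ _ _ _ _ _ (hfE u2) (pF m) (Xp m) (XF m) (pp m)) !mulmxE. Qed.

Lemma Amx_inv (a : 'rV[R]_m) : (Amx m a)^-1 = Amx m (- a).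
Proof.
have e1 : Amx m a * Amx m (- a) = 1
  by rewrite -mulmxE /Amx (G_inv _ _ _ _ _ _ (hfE u2) (pX m) (Fp m) (FX m) (pp m)).
have e2 : Amx m (- a) * Amx m a = 1.
  by rewrite -{2}[a]opprK -mulmxE /Amx (G_inv _ _ _ _ _ _ (hfE u2) (pX m) (Fp m) (FX m) (pp m)).
have U : Amx m a \is a GRing.unit by apply/unitrP; exists (Amx m (- a)).
by rewrite -[LHS]mul1r -e2 -mulrA mulrV // mulr1.
Qed.
Lemma Bmx_inv (a : 'rV[R]_m) : (Bmx m a)^-1 = Bmx m (- a).
Proof.
have e1 : Bmx m a * Bmx m (- a) = 1
  by rewrite -mulmxE /Bmx (G_inv _ _ _ _ _ _ (hfE u2) (pF m) (Xp m) (XF m) (pp m)).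
have e2 : Bmx m (- a) * Bmx m a = 1.
  by rewrite -{2}[a]opprK -mulmxE /Bmx (G_inv _ _ _ _ _ _ (hfE u2) (pF m) (Xp m) (XF m) (pp m)).
have U : Bmx m a \is a GRing.unit by apply/unitrP; exists (Bmx m (- a)).
by rewrite -[LHS]mul1r -e2 -mulrA mulrV // mulr1.
Qed.

Lemma cE (c : R) : c = - (2 * (- (hf * c))).
Proof. by rewrite mulrN opprK mulrA hfE // mul1r. Qed.

Lemma A_odd (J : R -> Prop) (HJ : is_ideal J) (a : 'rV[R]_m) :
  (forall i, J (a ord0 i)) -> gen_grp (2 * m) (EO_odd_gens m J) (Amx m a).
Proof.
move=> Ja; apply: (@decomp R m J HJ (Amx m) (gen_grp (2 * m) (EO_odd_gens m J))) Ja.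
- exact: gen_one.
- by move=> x y; apply: gen_mulc.
- exact: Amx_six.
- exact: Amx0.
- move=> j c Jc; rewrite [c]cE F1_A //; apply: gen_gen1.
  exists j.+1, (- (hf * c)); split.
  + by rewrite ltn_ord.
  + by apply: Jneg => //; apply: Jmul.
  + by left.
Qed.

Lemma B_odd (J : R -> Prop) (HJ : is_ideal J) (a : 'rV[R]_m) :
  (forall i, J (a ord0 i)) -> gen_grp (2 * m) (EO_odd_gens m J) (Bmx m a).
Proof.
move=> Ja; apply: (@decomp R m J HJ (Bmx m) (gen_grp (2 * m) (EO_odd_gens m J))) Ja.
- exact: gen_one.
- by move=> x y; apply: gen_mulc.
- exact: Bmx_six.
- exact: Bmx0.
- move=> j c Jc; rewrite [c]cE F2_B //; apply: gen_gen1.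
  exists j.+1, (- (hf * c)); split.
  + by rewrite ltn_ord.
  + by apply: Jneg => //; apply: Jmul.
  + by right.
Qed.

Lemma DSER_to_odd (J : R -> Prop) (HJ : is_ideal J) M :
  EO_DSER_gens m J M ->
  gen_grp (2 * m) (EO_odd_gens m J) M /\ gen_grp (2 * m) (EO_odd_gens m J) M^-1.
Proof.
case=> [[a [Ja ->]] | [a [Ja ->]]].
- have Ja' : forall i, J (a ord0 i).
    by move=> i; have := Ja 1 i; rewrite /alpha_map mxE mul1r.
  have Jna : forall i, J ((- a) ord0 i) by move=> i; rewrite mxE; apply: Jneg.
  by rewrite mx_alpha Amx_inv; split; apply: A_odd.
- have Ja' : forall i, J (a ord0 i).
    by move=> i; have := Ja 1 i; rewrite /beta_map mxE mul1r.
  have Jna : forall i, J ((- a) ord0 i) by move=> i; rewrite mxE; apply: Jneg.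
  by rewrite mx_beta Bmx_inv; split; apply: B_odd.
Qed.

Lemma odd_to_DSER (J : R -> Prop) (HJ : is_ideal J) M :
  EO_odd_gens m J M -> EO_DSER_gens m J M.
Proof.
case=> [[|i] [l [/andP [i1 im] Jl HM]]] //.
pose j := Ordinal im.
have Jz : forall z (i0 : 'I_m), J ((z *: (- (2 * l) *: (delta_mx 0 j : 'rV[R]_m))) 0 i0).
  move=> z i0; rewrite !mxE; case: (_ && _).
  + rewrite mulr1n mulr1 (_ : z * - (2 * l) = (- (2 * z)) * l); last by ring.
    exact: Jmul.
  + by rewrite mulr0n !mulr0; case: HJ.
case: HM => ->.
- left; exists (- (2 * l) *: delta_mx 0 j); split; first exact: Jz.
  by rewrite mx_alpha (F1_A m u2 j l).
- right; exists (- (2 * l) *: delta_mx 0 j); split; first exact: Jz.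
  by rewrite mx_beta (F2_B m u2 j l).
Qed.

End Final.

Theorem mainTheorem5 (R : comUnitRingType) (m : nat) (I : R -> Prop) :
  (2 : R) \is a GRing.unit -> is_ideal I -> (1 <= m)%N ->
  forall M : 'M[R]_((2 * m).+1), EO_DSER_RI m I M <-> EO_odd_RI m I M.
Proof.
move=> u2 HI _ M.
have HT : is_ideal (fun _ : R => True) by [].
split.
- apply: nc_mono.
  + by apply: gen_sub => s Hs; apply: (DSER_to_odd m u2 _ HT).
  + by apply: gen_sub => s Hs; apply: (DSER_to_odd m u2 _ HI).
- apply: nc_mono.
  + by apply: gen_mono => s Hs; apply: (odd_to_DSER m u2 _ HT).
  + by apply: gen_mono => s Hs; apply: (odd_to_DSER m u2 _ HI).
Qed.
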